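(* Consider the linear regression model $\boldsymbol{Y}=\boldsymbol{X}\boldsymbol{\theta}+\boldsymbol{\epsilon}$ with $\boldsymbol{Y}\in\mathbb{R}^n$, $\boldsymbol{X}$ an $n\times p$ design matrix, $\boldsymbol{\theta}\in\mathbb{R}^p$ and $\boldsymbol{\epsilon}\sim N_n(\boldsymbol{0},\sigma^2\boldsymbol{I}_n)$. Let $m^\ast=\{j:\theta_j\neq 0\}$ be the true model and $m_{\mathrm{full}}=\{1,\dots,p\}$. Let $\widehat{m}\subseteq m_{\mathrm{full}}$ be the model selected by a given model selection procedure applied to the sample $D$ of size $n$, and let $\widehat{m}^{(1)},\dots,\widehat{m}^{(B)}$ be the models obtained by applying the same procedure to bootstrap samples $D^{(1)},\dots,D^{(B)}$ generated from $D$. Fix $\alpha\in(0,1)$. Assume: (A.1) (model selection consistency) $P(\widehat{m}\not\supseteq m^\ast)=o(1)$ and $P(\widehat{m}\supsetneqq m^\ast)=o(1)$ as $n\to\infty$; (A.2) (bootstrap validity) for each resampled model, $P(\widehat{m}^{(b)}\neq\widehat{m})=o(1)$. Let $(\widehat{m}_L,\widehat{m}_U)$ be a solution of the program $$(\widehat{m}_L,\widehat{m}_U)=\underset{(m_1,m_2)\in S}{\arg\min}\left\{|m_2|-|m_1| : \widehat{r}(m_1,m_2)\ge 1-\alpha\right\},$$ where $S=\{(m_1^{(i)},m_2^{(i)}):0\le i\le p\}$ and, for each $i$, $(m_1^{(i)},m_2^{(i)})=\arg\max_{m_1,m_2}\{\widehat{r}(m_1,m_2): |m_2|-|m_1|=i,\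 \emptyset\subseteq m_1\subseteq m_2\subseteq m_{\mathrm{full}}\}$. Then $$P(\widehat{m}_L\subseteq m^\ast\subseteq\widehat{m}_U)\ge 1-\alpha+o(1).$$
   Context: Models are identified with index sets of predictors, i.e. subsets of $\{1,\dots,p\}$; $|m|$ denotes the cardinality of $m$. For nested models $m_1\subseteq m_2$, the bootstrap coverage rate is $\widehat{r}(m_1,m_2)=\frac{1}{B}\sum_{b=1}^B I(m_1\subseteq\widehat{m}^{(b)}\subseteq m_2)$, where $I(\cdot)$ is the indicator function. *)

(* Defs.v *)
From HB Require Import structures.
From mathcomp Require Import all_boot all_order all_algebra.
From mathcomp Require Import all_classical all_reals all_analysis.
Set Implicit Arguments. Unset Strict Implicit. Unset Printing Implicit Defensive.
Import Order.TTheory GRing.Theory Num.Theory.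
Import numFieldNormedType.Exports.
Local Open Scope classical_set_scope.
Local Open Scope ring_scope.

Definition cover_rate {R : realType} {p B : nat}
  (mb : 'I_B -> {set 'I_p}) (m1 m2 : {set 'I_p}) : R :=
  (B%:R)^-1 * \sum_(b < B) ((m1 \subset mb b) && (mb b \subset m2))%:R.

Definition width {p : nat} (m : {set 'I_p} * {set 'I_p}) : nat :=
  (#|m.2| - #|m.1|)%N.

Definition is_argmax_width {R : realType} {p : nat}
  (r : {set 'I_p} -> {set 'I_p} -> R) (i : nat) (m : {set 'I_p} * {set 'I_p}) :=
  [/\ m.1 \subset m.2, width m = i &
      forall m1 m2 : {set 'I_p}, m1 \subset m2 -> width (m1, m2) = i ->
        r m1 m2 <= r m.1 m.2].

Definition is_MCS_solution {R : realType} {p : nat}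
  (r : {set 'I_p} -> {set 'I_p} -> R) (alpha : R) (mL mU : {set 'I_p}) :=
  exists S : 'I_p.+1 -> {set 'I_p} * {set 'I_p},
    (forall i : 'I_p.+1, is_argmax_width r i (S i)) /\
    exists i0 : 'I_p.+1,
      [/\ (mL, mU) = S i0,
          1 - alpha <= r (S i0).1 (S i0).2 &
          forall i : 'I_p.+1, 1 - alpha <= r (S i).1 (S i).2 ->
            (width (S i0) <= width (S i))%N].

Definition support_model {R : realType} {p : nat} (theta : 'cV[R]_p)
  : {set 'I_p} := [set j | theta j 0 != 0].

Definition mutually_independent {R : realType} {d : measure_display}
  {T : measurableType d} (P : probability T R) {n : nat}
  (X : 'I_n -> T -> R) : Prop :=
  forall A : 'I_n -> set R, (forall i, measurable (A i)) ->
    P (\bigcap_(i in [set: 'I_n]) (X i @^-1` A i)) =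
    (\prod_(i < n) P (X i @^-1` A i))%E.

(* eps ~ N_n(0, sigma^2 I_n): components are measurable, mutually independent
   and each has law N(0, sigma^2) (normal_prob takes the standard deviation). *)
Definition gaussian_noise {R : realType} {d : measure_display}
  {T : measurableType d} (P : probability T R) {n : nat}
  (eps : T -> 'cV[R]_n) (sigma : R) : Prop :=
  [/\ forall i : 'I_n, measurable_fun setT (fun w => eps w i 0),
      mutually_independent P (fun i w => eps w i 0) &
      forall (i : 'I_n) (A : set R), measurable A ->
        P ((fun w => eps w i 0) @^-1` A) = normal_prob 0 sigma A].

(* Main.v *)
Require Import Defs.
From HB Require Import structures.
From mathcomp Require Import all_boot all_order all_algebra.
From mathcomp Require Import all_classical all_reals all_analysis.
From mathcomp Require Import lra.
Import Order.TTheory GRing.Theory Num.Theory.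
Import numFieldNormedType.Exports.
Local Open Scope classical_set_scope.
Local Open Scope ring_scope.

Theorem theorem1 (R : realType) (p B : nat) (theta : 'cV[R]_p) (sigma alpha : R)
  (d : nat -> measure_display) (Omega : forall n : nat, measurableType (d n))
  (P : forall n : nat, probability (Omega n) R)
  (X : forall n : nat, 'M[R]_(n, p))
  (eps : forall n : nat, Omega n -> 'cV[R]_n)
  (sel : forall n : nat, 'M[R]_(n, p) * 'cV[R]_n -> {set 'I_p})
  (Dboot : forall n : nat, 'I_B -> Omega n -> 'M[R]_(n, p) * 'cV[R]_n)
  (mL mU : forall n : nat, Omega n -> {set 'I_p}) :
  0 < sigma -> 0 < alpha < 1 -> (0 < B)%N ->
  (* epsilon ~ N_n(0, sigma^2 I_n), Y = X theta + epsilon *)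
  (forall n, gaussian_noise (P n) (eps n) sigma) ->
  (* measurability of the (joint) selected models *)
  (forall n (m : {set 'I_p}) (f : {ffun 'I_B -> {set 'I_p}}),
     measurable [set w | sel n (X n, X n *m theta + eps n w) = m /\
                         forall b, sel n (Dboot n b w) = f b]) ->
  (forall n (m1 m2 : {set 'I_p}), measurable [set w | mL n w = m1 /\ mU n w = m2]) ->
  (* (A.1) model selection consistency *)
  ((fun n => P n [set w | ~~ (support_model theta \subset
                               sel n (X n, X n *m theta + eps n w))])
     @ \oo --> 0%E) ->
  ((fun n => P n [set w | support_model theta \proper
                            sel n (X n, X n *m theta + eps n w)])
     @ \oo --> 0%E) ->
  (* (A.2) bootstrap validity *)
  (forall b : 'I_B,
     (fun n => P n [set w | sel n (Dboot n b w) != sel n (X n, X n *m theta + eps n w)])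
       @ \oo --> 0%E) ->
  (* (mL, mU) solves the program *)
  (forall n w, is_MCS_solution (cover_rate (fun b => sel n (Dboot n b w))) alpha
                               (mL n w) (mU n w)) ->
  exists e : nat -> R, e @ \oo --> 0 /\
    forall n, ((1 - alpha + e n)%:E <=
               P n [set w | (mL n w \subset support_model theta) &&
                            (support_model theta \subset mU n w)])%E.
Proof.
move=> sig0 /andP[a0 a1] B0 _ mjoint mLU HA1 HA2 HA3 Hsol.
have [B' eB] : exists B', B = B'.+1 by exists B.-1; rewrite prednK.
subst B.
set ms := support_model theta.
pose Ds n w := sel n (X n, X n *m theta + eps n w).
pose Bs n b w := sel n (Dboot n b w).
have mQ : forall n (Q : {set 'I_p} * {ffun 'I_B'.+1 -> {set 'I_p}} -> bool),
  measurable [set w | Q (Ds n w, [ffun b => Bs n b w])].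
  move=> n Q.
  have -> : [set w | Q (Ds n w, [ffun b => Bs n b w])] =
     \bigcup_(x in [set x | Q x]) [set w | Ds n w = x.1 /\ forall b, Bs n b w = x.2 b].
    apply/seteqP; split => w /=.
    - move=> Qw; exists (Ds n w, [ffun b => Bs n b w]) => //=; split=> // b; by rewrite ffunE.
    - move=> [[m f]] /= Qx [Dm Hf].
      suff -> : [ffun b => Bs n b w] = f by rewrite Dm.
      by apply/ffunP => b; rewrite ffunE Hf.
  apply: fin_bigcup_measurable; first exact: finite_finset.
  move=> [m f] _; exact: mjoint.
pose A1 n := [set w | ~~ (ms \subset Ds n w)].
pose A2 n := [set w | ms \proper Ds n w].
pose Bb n b := [set w | Bs n b w != Ds n w].
pose E n := [set w | (Ds n w == ms) && [forall b, Bs n b w == ms]].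
pose G n := [set w | (mL n w \subset ms) && (ms \subset mU n w)].
have mA1 n : measurable (A1 n) by exact: (mQ n (fun x => ~~ (ms \subset x.1))).
have mA2 n : measurable (A2 n) by exact: (mQ n (fun x => ms \proper x.1)).
have mBb n b : measurable (Bb n b).
  have := mQ n (fun x => x.2 b != x.1); congr measurable.
  by apply/seteqP; split => w /=; rewrite ffunE.
have mE n : measurable (E n).
  have := mQ n (fun x => (x.1 == ms) && [forall b, x.2 b == ms]); congr measurable.
  apply/seteqP; split => w /=; congr (_ && _); apply: eq_forallb => b; by rewrite ffunE.
have mG n : measurable (G n).
  have -> : G n = \bigcup_(x in [set x : {set 'I_p} * {set 'I_p} | (x.1 \subset ms) && (ms \subset x.2)])
       [set w | mL n w = x.1 /\ mU n w = x.2].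
    apply/seteqP; split => w /=.
    - by move=> Gw; exists (mL n w, mU n w).
    - by move=> [[m1 m2]] /= H [e1 e2]; rewrite /G /= e1 e2.
  apply: fin_bigcup_measurable; first exact: finite_finset.
  move=> [m1 m2] _; exact: mLU.
have EG n : E n `<=` G n.
  move=> w /andP[/eqP HD /forallP HB].
  have HB' : forall b, sel n (Dboot n b w) = ms by move=> b; exact/eqP/HB.
  have [S [_ [i0 [eq hr _]]]] := Hsol n w.
  rewrite /G /=; move: hr; rewrite -eq /= /cover_rate.
  under eq_bigr do rewrite HB'.
  case: (_ && _) => //.
  by rewrite big1 // mulr0 subr_le0 leNgt a1.
pose F n (k : nat) := if k is k'.+2 then Bb n (inord k') else if k is 1 then A2 n else A1 n.
have notE n : ~` E n `<=` \big[setU/set0]_(k < B'.+3) F n k.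
  move=> w; rewrite -bigcup_mkord /E /= => /negP.
  have case1 : Ds n w != ms -> (\bigcup_(i < B'.+3) F n i) w.
    move=> hD; case: (boolP (ms \subset Ds n w)) => h.
    - by exists 1%N => //=; rewrite /A2 /= finset.properEneq eq_sym hD h.
    - by exists 0%N.
  case: (eqVneq (Ds n w) ms) => [e|hD] /=; last by move=> _; exact: case1.
  move=> /forallPn [b hb]; exists b.+2 => /=; first by rewrite /= ltnS ltnS ltn_ord.
  by rewrite /Bb /= inord_val e.
have sub n : (P n (~` E n) <= P n (A1 n) + (P n (A2 n) + \sum_(b < B'.+1) P n (Bb n b)))%E.
  apply: le_trans (content_subadditive _ _ _ (notE n)) _.
  - by move=> [|[|k]] _ /=.
  - exact: measurableC.
  rewrite big_ord_recl /= big_ord_recl /=.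
  by rewrite (eq_bigr (fun b : 'I_B'.+1 => P n (Bb n b))) // => i _; rewrite /= inord_val.
pose s n := fine (P n (A1 n)) + (fine (P n (A2 n)) + \sum_(b < B'.+1) fine (P n (Bb n b))).
have hs : s n @[n --> \oo] --> 0.
  have c1 := fine_cvg HA1.
  have c2 := fine_cvg HA2.
  have c3 := @cvg_big _ 'I_B'.+1 +%R 0 xpredT add_continuous nat \oo (index_enum 'I_B'.+1)
     (fun b n => fine (P n (Bb n b))) (fun=> 0) _ (fun b _ => fine_cvg (HA3 b)).
  rewrite big1 // in c3.
  have {c1}c1 := c1 eventually_filter.
  have {c2}c2 := c2 eventually_filter.
  have {c3}c3 := c3 eventually_filter eventually_filter.
  have := cvgD c1 (cvgD c2 c3); rewrite !addr0; exact.
exists (fun n => - s n); split.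
  have := cvgN hs; rewrite oppr0; move=> h; exact: (h eventually_filter).
move=> n.
have fP : forall A, measurable A -> P n A \is a fin_num by move=> A mA; exact: fin_num_measure.
apply: (le_trans _ (le_measure (P n) (mem_set (mE n)) (mem_set (mG n)) (EG n))).
have hc : (1 - P n (~` E n) <= P n (E n))%E.
  by rewrite -probability_setC ?setCK //; exact: measurableC.
apply: le_trans hc.
apply: (@le_trans _ _ (1 - (s n)%:E)%E).
  rewrite -EFinB lee_fin; lra.
apply: leeB => //.
rewrite /s EFinD EFinD -sumEFin !fineK ?fP //.
rewrite (eq_bigr (fun b => P n (Bb n b))); first exact: sub.
by move=> b _; rewrite fineK // fP.
Qed.
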